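(* Let $1\le K<d$ be integers. For $\lambda\in(0,1)$ let $\bar F_\lambda$ be the solution of $\bar F'(w)=T_\lambda(\bar F(w))-\bar F(w)$, $\bar F(0)=\lambda$, with $T_\lambda$ as below, and let $\mathbb E[W_\lambda]=\frac1\lambda\int_0^\infty T_\lambda(\bar F_\lambda(w))\,dw$. Then $$\lim_{\lambda\to1^-}-\frac{\mathbb E[W_\lambda]}{\log(1-\lambda)}=\frac{K}{d-K}.$$
   Context: For integers $1\le K<d$ and $\lambda\in(0,1)$, $T_\lambda(u)=\frac{\lambda}{K}\sum_{j=0}^{K-1}(K-j)\binom{d}{j}u^{d-j}(1-u)^j$ for $u\in[0,\infty)$ (the LL($d,K$) policy: batches of $K$ exponential(1) jobs sent to the $K$ least loaded of $d$ sampled servers). *)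

(* Defs.v *)
From Stdlib Require Import Reals Lra.
From Coquelicot Require Import Coquelicot.
Open Scope R_scope.

Definition T_LL (d K : nat) (lam u : R) : R :=
  lam / INR K *
  sum_f_R0 (fun j => INR (K - j) * Binomial.C d j * u ^ (d - j) * (1 - u) ^ j) (K - 1).

Definition is_LL_solution (d K : nat) (lam : R) (F : R -> R) : Prop :=
  F 0 = lam /\
  filterlim F (at_right 0) (locally lam) /\
  (forall w, 0 < w -> is_derive F w (T_LL d K lam (F w) - F w)).

Definition mean_wait (d K : nat) (lam : R) (F : R -> R) : R :=
  / lam * real (Lim (fun b => RInt (fun w => T_LL d K lam (F w)) 0 b) p_infty).

(* Main.v *)
Require Import Defs.
From Stdlib Require Import Reals Lra Lia Factorial Classical.
From Coquelicot Require Import Coquelicot.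
Open Scope R_scope.

Definition Bj (d j : nat) (u : R) := Binomial.C d j * u ^ (d - j) * (1 - u) ^ j.

Lemma Bj_nonneg d j u : 0 <= u <= 1 -> 0 <= Bj d j u.
Proof.
  intros Hu. unfold Bj, Binomial.C.
  apply Rmult_le_pos; [apply Rmult_le_pos|].
  - apply Rmult_le_pos; [apply pos_INR|]. left; apply Rinv_0_lt_compat.
    apply Rmult_lt_0_compat; apply INR_fact_lt_0.
  - apply pow_le; lra.
  - apply pow_le; lra.
Qed.

Lemma sum_B d u : sum_f_R0 (fun j => Bj d j u) d = 1.
Proof.
  rewrite <- (pow1 d). replace 1 with ((1 - u) + u) by ring.
  rewrite binomial. apply sum_eq. intros i Hi. unfold Bj. ring.
Qed.

Lemma C_shift n i : (i <= n)%nat ->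
  INR (S i) * Binomial.C (S n) (S i) = INR (S n) * Binomial.C n i.
Proof.
  intros H. unfold Binomial.C. replace (S n - S i)%nat with (n - i)%nat by lia.
  change (fact (S n)) with (S n * fact n)%nat.
  change (fact (S i)) with (S i * fact i)%nat.
  rewrite !mult_INR.
  assert (INR (fact i) <> 0) by apply INR_fact_neq_0.
  assert (INR (fact n) <> 0) by apply INR_fact_neq_0.
  assert (INR (fact (n-i)) <> 0) by apply INR_fact_neq_0.
  assert (INR (S i) <> 0) by (apply not_0_INR; lia).
  field; repeat split; auto.
Qed.

Lemma sum_jB d u : sum_f_R0 (fun j => INR j * Bj d j u) d = INR d * (1 - u).
Proof.
  destruct d as [|d'].
  - simpl. ring.
  - rewrite decomp_sum by lia. simpl pred.
    rewrite (sum_eq _ (fun i => Bj d' i u * (INR (S d') * (1-u)))).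
    + rewrite <- scal_sum, sum_B. simpl INR at 1. ring.
    + intros i Hi. unfold Bj. rewrite <- Rmult_assoc, <- Rmult_assoc, C_shift by lia.
      replace (S d' - S i)%nat with (d' - i)%nat by lia. simpl pow. ring.
Qed.

Lemma sum_ext_zero (f : nat -> R) (n m : nat) : (n <= m)%nat ->
  (forall j, (n < j <= m)%nat -> f j = 0) -> sum_f_R0 f m = sum_f_R0 f n.
Proof.
  intros H. induction H; intros Hz; auto.
  rewrite tech5, IHle by (intros; apply Hz; lia). rewrite (Hz (S m)) by lia. ring.
Qed.

Lemma sum_ge_term (f : nat -> R) (n k : nat) : (k <= n)%nat ->
  (forall j, (j <= n)%nat -> 0 <= f j) -> f k <= sum_f_R0 f n.
Proof.
  intros H. induction H; intros Hp.
  - destruct k. simpl; lra. rewrite tech5.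
    assert (0 <= sum_f_R0 f k). { clear -Hp. induction k. simpl. apply Hp; lia.
      rewrite tech5. assert (0 <= f (S k)) by (apply Hp; lia).
      assert (0 <= sum_f_R0 f k) by (apply IHk; intros; apply Hp; lia). lra. }
    lra.
  - rewrite tech5. assert (0 <= f (S m)) by (apply Hp; lia).
    assert (f k <= sum_f_R0 f m) by (apply IHle; intros; apply Hp; lia). lra.
Qed.

Definition Pp (d K : nat) (u : R) :=
  sum_f_R0 (fun j => INR (K - j) * Binomial.C d j * u ^ (d - j) * (1 - u) ^ j) (K - 1).

Definition cj (d K j : nat) := INR K - INR K * INR j / INR d - INR (K - j).

Definition Qq d K u := INR K * u - Pp d K u.

Lemma Q_repr d K u : (1 <= K)%nat -> (K < d)%nat ->
  Qq d K u = sum_f_R0 (fun j => cj d K j * Bj d j u) d.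
Proof.
  intros H1 H2.
  assert (Hd : INR d <> 0) by (apply not_0_INR; lia).
  unfold Qq, cj.
  assert (HP : Pp d K u = sum_f_R0 (fun j => INR (K - j) * Bj d j u) d).
  { unfold Pp. rewrite (sum_ext_zero (fun j => INR (K - j) * Bj d j u) (K-1) d) by
      (try lia; intros j Hj; replace (K - j)%nat with 0%nat by lia; simpl; ring).
    apply sum_eq; intros; unfold Bj; ring. }
  rewrite HP.
  rewrite (sum_eq (fun j => (INR K - INR K * INR j / INR d - INR (K - j)) * Bj d j u) (fun j => (Bj d j u * INR K - (INR j * Bj d j u) * (INR K / INR d))
     - INR (K - j) * Bj d j u))  by (intros; cbv beta; field; auto).
  rewrite !minus_sum, <- !scal_sum.
  rewrite sum_jB, sum_B. field. auto.
Qed.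

Lemma C1 n : Binomial.C (S n) 1 = INR (S n).
Proof.
  pose proof (C_shift n 0 ltac:(lia)) as H. simpl INR in H at 1.
  unfold Binomial.C in H at 2. rewrite Nat.sub_0_r in H. simpl fact in H.
  assert (INR (fact n) <> 0) by apply INR_fact_neq_0.
  rewrite Rmult_1_l in H. rewrite H. simpl INR. field; auto.
Qed.

Lemma sum_nonneg (f : nat -> R) n : (forall j, (j <= n)%nat -> 0 <= f j) -> 0 <= sum_f_R0 f n.
Proof.
  intros H. induction n. simpl; apply H; lia.
  rewrite tech5. assert (0 <= f (S n)) by (apply H; lia).
  assert (0 <= sum_f_R0 f n) by (apply IHn; intros; apply H; lia). lra.
Qed.

Section Q.
Variables d K : nat.
Hypothesis H1 : (1 <= K)%nat.
Hypothesis H2 : (K < d)%nat.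
Let m := INR d - INR K.

Lemma INR_lt_dK : INR K < INR d.
Proof. apply lt_INR; auto. Qed.
Lemma INR_K_pos : 1 <= INR K.
Proof. apply (le_INR 1); auto. Qed.

Lemma cj_nonneg j : (j <= d)%nat -> 0 <= cj d K j.
Proof.
  intros Hj. pose proof INR_lt_dK. pose proof INR_K_pos.
  assert (0 <= INR j) by apply pos_INR. assert (INR j <= INR d) by (apply le_INR; auto).
  unfold cj. destruct (Nat.le_gt_cases j K).
  - rewrite minus_INR by auto.
    replace (INR K - INR K * INR j / INR d - (INR K - INR j)) with (INR j * (INR d - INR K) / INR d) by (field; lra).
    apply Rmult_le_pos; [apply Rmult_le_pos; lra|]. left; apply Rinv_0_lt_compat; lra.
  - replace (K - j)%nat with 0%nat by lia. simpl INR.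
    replace (INR K - INR K * INR j / INR d - 0) with (INR K * (INR d - INR j) / INR d) by (field; lra).
    apply Rmult_le_pos; [apply Rmult_le_pos; lra|]. left; apply Rinv_0_lt_compat; lra.
Qed.

Lemma cj_le j : (j <= d)%nat -> cj d K j <= m * INR j / INR d.
Proof.
  intros Hj. pose proof INR_lt_dK. pose proof INR_K_pos. unfold m.
  assert (0 <= INR j) by apply pos_INR. assert (INR j <= INR d) by (apply le_INR; auto).
  unfold cj. destruct (Nat.le_gt_cases j K).
  - rewrite minus_INR by auto. right. field. lra.
  - replace (K - j)%nat with 0%nat by lia. simpl INR.
    assert (INR K <= INR j) by (apply le_INR; lia).
    apply (Rmult_le_reg_r (INR d)). lra.
    replace ((INR K - INR K * INR j / INR d - 0) * INR d) with (INR K * (INR d - INR j)) by (field; lra).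
    replace ((INR d - INR K) * INR j / INR d * INR d) with ((INR d - INR K) * INR j) by (field; lra).
    nra.
Qed.

Lemma Q_nonneg u : 0 <= u <= 1 -> 0 <= Qq d K u.
Proof.
  intros Hu. rewrite Q_repr by auto. apply sum_nonneg.
  intros j Hj. apply Rmult_le_pos; [apply cj_nonneg; auto | apply Bj_nonneg; auto].
Qed.

Lemma Q_le u : 0 <= u <= 1 -> Qq d K u <= m * (1 - u).
Proof.
  intros Hu. rewrite Q_repr by auto.
  assert (Hd : INR d <> 0) by (apply not_0_INR; lia).
  replace (m * (1 - u)) with ((m / INR d) * sum_f_R0 (fun j => INR j * Bj d j u) d)
    by (rewrite sum_jB; field; auto).
  rewrite scal_sum. apply sum_Rle. intros j Hj.
  pose proof (cj_le j Hj). pose proof (Bj_nonneg d j u Hu).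
  replace (INR j * Bj d j u * (m / INR d)) with ((m * INR j / INR d) * Bj d j u) by (field; auto).
  apply Rmult_le_compat_r; auto.
Qed.

Lemma Q_ge1 u : 0 <= u <= 1 -> m * u ^ (d - 1) * (1 - u) <= Qq d K u.
Proof.
  intros Hu. rewrite Q_repr by auto.
  assert (Hd : INR d <> 0) by (apply not_0_INR; lia).
  eapply Rle_trans; [|apply (sum_ge_term _ d 1); [lia|]].
  - destruct d as [|d']; [lia|]. unfold Bj. rewrite C1.
    unfold cj. replace (K - 1)%nat with (K - 1)%nat by lia. rewrite minus_INR by lia.
    right. unfold m. simpl pow. replace (INR 1) with 1 by reflexivity. field. auto.
  - intros j Hj. apply Rmult_le_pos; [apply cj_nonneg; auto | apply Bj_nonneg; auto].
Qed.

Lemma Q_ge2 u : 0 <= u <= 1 -> INR K * u * (1 - u) ^ (d - 1) <= Qq d K u.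
Proof.
  intros Hu. rewrite Q_repr by auto.
  assert (Hd : INR d <> 0) by (apply not_0_INR; lia).
  eapply Rle_trans; [|apply (sum_ge_term _ d (d - 1)); [lia|]].
  - destruct d as [|d']; [lia|]. unfold Bj. rewrite pascal_step1 by lia.
    replace (S d' - (S d' - 1))%nat with 1%nat by lia. rewrite C1.
    unfold cj. replace (K - (S d' - 1))%nat with 0%nat by lia.
    replace (S d' - 1)%nat with d' by lia.
    right. simpl pow. rewrite S_INR in *. simpl INR. field. auto.
  - intros j Hj. apply Rmult_le_pos; [apply cj_nonneg; auto | apply Bj_nonneg; auto].
Qed.
End Q.

Lemma Pp_nonneg d K u : 0 <= u <= 1 -> 0 <= Pp d K u.
Proof.
  intros Hu. unfold Pp. apply sum_nonneg. intros j _.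
  pose proof (Bj_nonneg d j u Hu) as H. unfold Bj in H.
  rewrite !Rmult_assoc. apply Rmult_le_pos. apply pos_INR. rewrite <- !Rmult_assoc. auto.
Qed.

Lemma bernoulli_le n u : 0 <= u <= 1 -> 1 - u ^ n <= INR n * (1 - u).
Proof.
  intros Hu. induction n. simpl; lra.
  rewrite S_INR. simpl pow.
  assert (u ^ n <= 1) by (rewrite <- (pow1 n); apply pow_incr; lra).
  assert (0 <= u ^ n) by (apply pow_le; lra).
  nra.
Qed.

Section T.
Variables (d K : nat) (lam : R).
Hypothesis H1 : (1 <= K)%nat.
Hypothesis H2 : (K < d)%nat.
Hypothesis Hlam : 0 < lam < 1.
Let m := INR d - INR K.
Let Tf := T_LL d K lam.

Lemma Kpos : 0 < INR K.
Proof. pose proof (INR_K_pos K H1). lra. Qed.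
Lemma mpos : 0 < m.
Proof. pose proof (INR_lt_dK d K H2). unfold m; lra. Qed.

Lemma T_Q u : Tf u = lam * (INR K * u - Qq d K u) / INR K.
Proof. unfold Tf, T_LL. fold (Pp d K u). unfold Qq. pose proof Kpos. field. lra. Qed.

Lemma T_nonneg u : 0 <= u <= 1 -> 0 <= Tf u.
Proof. intros Hu. unfold Tf, T_LL. fold (Pp d K u). pose proof Kpos. pose proof (Pp_nonneg d K u Hu).
  apply Rmult_le_pos; auto. apply Rmult_le_pos. lra. left; apply Rinv_0_lt_compat; lra. Qed.

Lemma T_le u : 0 <= u <= 1 -> Tf u <= lam * u.
Proof. intros Hu. rewrite T_Q. pose proof Kpos. pose proof (Q_nonneg d K H1 H2 u Hu).
  apply (Rmult_le_reg_r (INR K)); auto. field_simplify; [|lra]. nra. Qed.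

Lemma T_ge u : 0 <= u <= 1 -> lam * (1 - INR d / INR K * (1 - u)) <= Tf u.
Proof. intros Hu. rewrite T_Q. pose proof Kpos. pose proof (Q_le d K H1 H2 u Hu). fold m in H0.
  apply (Rmult_le_reg_r (INR K)); auto. unfold m in H0. field_simplify; [|lra|lra]. nra. Qed.

Definition Cc := INR K * INR (d - 2) * 2 ^ (d - 2) / (INR d - INR K) + 2 ^ (d - 1).

Lemma Cc_pos : 0 <= Cc.
Proof. unfold Cc. pose proof mpos. pose proof Kpos. unfold m in H.
  assert (0 <= INR (d-2)) by apply pos_INR.
  assert (0 < 2 ^ (d-2)) by (apply pow_lt; lra). assert (0 < 2 ^ (d-1)) by (apply pow_lt; lra).
  assert (0 <= INR K * INR (d - 2) * 2 ^ (d - 2) / (INR d - INR K)).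
  { apply Rmult_le_pos. apply Rmult_le_pos. nra. lra. left; apply Rinv_0_lt_compat; lra. }
  lra. Qed.

Lemma KuQ u : 0 < u < 1 -> INR K * u <= (INR K / (m * (1 - u)) + Cc) * Qq d K u.
Proof.
  intros Hu. pose proof mpos. pose proof Kpos.
  assert (Hu' : 0 <= u <= 1) by lra.
  destruct (Rle_lt_dec (1/2) u) as [Hh|Hh].
  - pose proof (Q_ge1 d K H1 H2 u Hu') as HQ. fold m in HQ.
    eapply Rle_trans; [|apply Rmult_le_compat_l; [|exact HQ]].
    2:{ pose proof Cc_pos. apply Rplus_le_le_0_compat; auto. left. apply Rdiv_lt_0_compat; auto. nra. }
    replace (d - 1)%nat with (S (d - 2)) by lia. simpl pow.
    set (n := (d - 2)%nat). set (p := u ^ n).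
    assert (Hb : 1 - p <= INR n * (1 - u)) by (apply bernoulli_le; lra).
    assert (Hp : 1 <= 2 ^ n * p) by (unfold p; rewrite <- Rpow_mult_distr; apply pow_R1_Rle; lra).
    assert (0 <= p) by (apply pow_le; lra).
    unfold Cc. fold n. replace (d - 1)%nat with (S n) by (unfold n; lia). fold m.
    assert (0 < 2 ^ n) by (apply pow_lt; lra).
    assert (0 <= INR n) by apply pos_INR.
    replace ((INR K / (m * (1 - u)) + (INR K * INR n * 2 ^ n / m + 2 ^ S n)) * (m * (u * p) * (1 - u)))
      with (INR K * u * p + INR K * INR n * (2 ^ n * p) * u * (1-u) + 2 ^ S n * (m * (u * p) * (1 - u)))
      by (field; split; lra).
    assert (0 <= 2 ^ S n * (m * (u * p) * (1 - u))).
    { apply Rmult_le_pos. left; apply pow_lt; lra. apply Rmult_le_pos; [|lra]. apply Rmult_le_pos; nra. }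
    assert (INR K * u * (1 - p) <= INR K * INR n * (2 ^ n * p) * u * (1-u)).
    { assert (INR K * u * (1 - p) <= INR K * u * (INR n * (1-u))) by (apply Rmult_le_compat_l; nra).
      assert (INR K * u * (INR n * (1-u)) <= INR K * u * (INR n * (1-u)) * (2^n * p)).
      { rewrite <- (Rmult_1_r (INR K * u * (INR n * (1-u)))) at 1. apply Rmult_le_compat_l; auto.
        apply Rmult_le_pos; nra. }
      nra. }
    nra.
  - pose proof (Q_ge2 d K H1 H2 u Hu') as HQ.
    eapply Rle_trans; [|apply Rmult_le_compat_l; [|exact HQ]].
    2:{ pose proof Cc_pos. apply Rplus_le_le_0_compat; auto. left. apply Rdiv_lt_0_compat; auto. nra. }
    assert (Hp : 1 <= 2 ^ (d-1) * (1-u) ^ (d-1)) by (rewrite <- Rpow_mult_distr; apply pow_R1_Rle; lra).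
    assert (0 <= INR K / (m * (1 - u))) by (left; apply Rdiv_lt_0_compat; auto; nra).
    assert (0 <= INR K * INR (d - 2) * 2 ^ (d - 2) / (INR d - INR K)).
    { assert (0 <= INR (d-2)) by apply pos_INR. assert (0 < 2 ^ (d-2)) by (apply pow_lt; lra).
      apply Rmult_le_pos. apply Rmult_le_pos. nra. lra. left; apply Rinv_0_lt_compat; unfold m in H; lra. }
    assert (0 <= INR K * u * (1 - u) ^ (d - 1)) by (apply Rmult_le_pos; [nra| apply pow_le; lra]).
    unfold Cc.
    assert (INR K * u <= 2 ^ (d - 1) * (INR K * u * (1 - u) ^ (d - 1))).
    { replace (2 ^ (d - 1) * (INR K * u * (1 - u) ^ (d - 1))) with ((INR K * u) * (2 ^ (d-1) * (1 - u) ^ (d - 1))) by ring.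
      rewrite <- (Rmult_1_r (INR K * u)) at 1. apply Rmult_le_compat_l; nra. }
    nra.
Qed.

Lemma upper_cond u : 0 < u < 1 -> Tf u <= (INR K / (m * (1 - u)) + Cc) * (u - Tf u).
Proof.
  intros Hu. pose proof mpos. pose proof Kpos.
  assert (Hu' : 0 <= u <= 1) by lra.
  pose proof (KuQ u Hu). pose proof (Q_nonneg d K H1 H2 u Hu') as HQ.
  set (Q := Qq d K u) in *.
  set (Ph := INR K / (m * (1 - u)) + Cc).
  assert (0 <= Ph) by (unfold Ph; pose proof Cc_pos; assert (0 < INR K / (m * (1 - u))) by (apply Rdiv_lt_0_compat; nra); lra).
  pose proof (T_nonneg u Hu').
  assert (HTQ : Tf u * Q <= INR K * u * (u - Tf u)).
  { rewrite T_Q. fold Q. apply (Rmult_le_reg_r (INR K)); auto. field_simplify; [|lra|lra].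
    assert (0 <= u * Q) by nra. nra. }
  apply (Rmult_le_reg_l (INR K * u)). nra.
  assert (Tf u * (INR K * u) <= Tf u * (Ph * Q)) by (apply Rmult_le_compat_l; auto).
  assert (Ph * (Tf u * Q) <= Ph * (INR K * u * (u - Tf u))) by (apply Rmult_le_compat_l; auto).
  nra.
Qed.

Lemma lower_cond u : 0 < u < 1 -> INR K < lam * INR d ->
  lam * (1 - INR d / INR K * (1 - u)) / ((1 - lam) + (lam * INR d / INR K - 1) * (1 - u))
    * (u - Tf u) <= Tf u.
Proof.
  intros Hu Hl. pose proof Kpos. assert (Hu' : 0 <= u <= 1) by lra.
  pose proof (T_ge u Hu'). pose proof (T_le u Hu').
  set (L := lam * (1 - INR d / INR K * (1 - u))) in *.
  assert (Hden : (1 - lam) + (lam * INR d / INR K - 1) * (1 - u) = u - L).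
  { unfold L. field. lra. }
  rewrite Hden.
  assert (Ha : 0 < lam * INR d / INR K - 1).
  { apply (Rmult_lt_reg_r (INR K)); auto. field_simplify; lra. }
  assert (0 < u - L) by (rewrite <- Hden; nra).
  assert (0 <= u - Tf u) by nra.
  pose proof (T_nonneg u Hu').
  apply (Rmult_le_reg_r (u - L)); auto.
  replace (L / (u - L) * (u - Tf u) * (u - L)) with (L * (u - Tf u)) by (field; lra).
  destruct (Rle_lt_dec L 0); nra.
Qed.
End T.

Lemma mono_le (f df : R -> R) a b : a <= b ->
  (forall x, a < x < b -> is_derive f x (df x)) ->
  (forall x, a <= x <= b -> continuous f x) ->
  (forall x, a < x < b -> 0 <= df x) -> f a <= f b.
Proof.
  intros Hab Hd Hc Hs. destruct Hab as [Hab|Hab]; [|subst; lra].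
  set (pr1 := fun c (P : a < c < b) => exist (fun l => derivable_pt_lim f c l) (df c)
                (proj1 (is_derive_Reals f c (df c)) (Hd c P))).
  set (pr2 := fun c (P : a < c < b) => derivable_pt_id c).
  destruct (MVT f id a b pr1 pr2 Hab) as [c [P HP]].
  - intros x Hx. apply continuity_pt_filterlim. apply Hc; auto.
  - intros x Hx. apply derivable_continuous_pt. apply derivable_pt_id.
  - rewrite derive_pt_id in HP. simpl in HP. unfold id in HP.
    pose proof (Hs c P). nra.
Qed.

Lemma T_cont d K lam u : continuous (T_LL d K lam) u.
Proof.
  unfold T_LL. apply (continuous_mult (fun _ => lam / INR K)). apply continuous_const.
  apply continuity_pt_filterlim.
  apply (continuity_pt_finite_SF (fun j u => INR (K - j) * Binomial.C d j * u ^ (d - j) * (1 - u) ^ j)).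
  intros j _. apply derivable_continuous_pt. apply ex_derive_Reals_0.
  auto_derive. auto.
Qed.

Definition Ft (lam : R) (F : R -> R) (w : R) : R :=
  if Rlt_dec 0 w then F w else lam.

Lemma ball_R (x e y : R) : ball x e y <-> Rabs (y - x) < e.
Proof. split; auto. Qed.

Section Ft.
Variables (d K : nat) (lam : R) (F : R -> R).
Hypothesis HF : is_LL_solution d K lam F.

Lemma Ft_0 : Ft lam F 0 = lam.
Proof. unfold Ft. destruct (Rlt_dec 0 0); [lra|auto]. Qed.

Lemma Ft_pos w : 0 < w -> Ft lam F w = F w.
Proof. unfold Ft. destruct (Rlt_dec 0 w); [auto|lra]. Qed.

Lemma Ft_loc w : 0 < w -> locally w (fun t => F t = Ft lam F t).
Proof.
  intros Hw. exists (mkposreal w Hw). intros t Ht. apply ball_R in Ht. simpl in Ht.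
  rewrite Ft_pos; auto. apply Rabs_lt_between' in Ht. lra.
Qed.

Lemma Ft_deriv w : 0 < w -> is_derive (Ft lam F) w (T_LL d K lam (Ft lam F w) - Ft lam F w).
Proof.
  intros Hw. destruct HF as [_ [_ HD]]. rewrite Ft_pos by auto.
  apply (is_derive_ext_loc F). apply Ft_loc; auto. apply HD; auto.
Qed.

Lemma Ft_cont w : continuous (Ft lam F) w.
Proof.
  destruct (Rlt_dec 0 w) as [Hw|Hw].
  - apply (continuous_ext_loc _ F).
    + destruct (Ft_loc w Hw) as [e He]. exists e. intros t Ht. apply He; auto.
    + apply (ex_derive_continuous (K := R_AbsRing) (V := R_NormedModule)). destruct HF as [_ [_ HD]]. eexists. apply HD; auto.
  - destruct (Rle_lt_dec w 0) as [Hw'|Hw']; [|lra].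
    destruct Hw' as [Hw'|Hw'].
    + apply (continuous_ext_loc _ (fun _ => lam)).
      * exists (mkposreal (-w) ltac:(lra)). intros t Ht. apply ball_R in Ht. simpl in Ht.
        apply Rabs_lt_between' in Ht. unfold Ft. destruct (Rlt_dec 0 t); [lra|auto].
      * apply continuous_const.
    + subst w. unfold continuous. rewrite Ft_0.
      apply filterlim_locally. intros eps.
      destruct HF as [_ [HR _]].
      pose proof (proj1 (filterlim_locally F lam) HR eps) as [del Hdel].
      exists del. intros y Hy. unfold Ft. destruct (Rlt_dec 0 y).
      * apply Hdel; auto.
      * apply ball_center.
Qed.

Lemma TFt_cont w : continuous (fun t => T_LL d K lam (Ft lam F t)) w.
Proof. apply (continuous_comp (Ft lam F) (T_LL d K lam)). apply Ft_cont. apply T_cont. Qed.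

End Ft.

Lemma der_fexp (f : R -> R) df c x : is_derive f x df ->
  is_derive (fun t => f t * exp (c * t)) x (df * exp (c * x) + f x * (c * exp (c * x))).
Proof.
  intros H. assert (He : is_derive (fun t => exp (c * t)) x (c * exp (c * x))).
  { auto_derive; auto. ring. }
  pose proof (is_derive_mult (K:=R_AbsRing) f (fun t => exp (c * t)) x df _ H He Rmult_comm) as HM.
  exact HM.
Qed.

Lemma cont_fexp (f : R -> R) c x : continuous f x -> continuous (fun t => f t * exp (c * t)) x.
Proof.
  intros H. apply (continuous_mult (K:=R_AbsRing) f (fun t => exp (c * t))); auto.
  apply (ex_derive_continuous (K := R_AbsRing) (V := R_NormedModule)). auto_derive. auto.
Qed.

Section Inv.
Variables (d K : nat) (lam : R) (F : R -> R).
Hypothesis H1 : (1 <= K)%nat.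
Hypothesis H2 : (K < d)%nat.
Hypothesis Hlam : 0 < lam < 1.
Hypothesis HF : is_LL_solution d K lam F.
Let f := Ft lam F.
Let Tf := T_LL d K lam.

Lemma bounds_upto s : 0 <= s -> (forall t, 0 < t < s -> 0 <= f t <= 1) ->
  lam * exp (- s) <= f s <= lam * exp (- (1 - lam) * s).
Proof.
  intros Hs Hin. split.
  - assert (HG : f 0 * exp (1 * 0) <= f s * exp (1 * s)).
    { apply (mono_le (fun t => f t * exp (1 * t)) (fun t => (Tf (f t) - f t) * exp (1 * t) + f t * (1 * exp (1 * t)))); auto.
      - intros x Hx. apply der_fexp. apply (Ft_deriv d K lam F HF); auto. lra.
      - intros x Hx. apply cont_fexp. apply (Ft_cont d K lam F HF).
      - intros x Hx. pose proof (T_nonneg d K lam H1 Hlam (f x) (Hin x Hx)).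
        pose proof (exp_pos (1 * x)). fold Tf in H. nra. }
    unfold f in HG at 1. rewrite Ft_0 in HG. rewrite Rmult_0_r, exp_0, Rmult_1_r, Rmult_1_l in HG.
    apply (Rmult_le_reg_r (exp s)). apply exp_pos.
    rewrite Rmult_assoc, <- exp_plus. replace (-s + s) with 0 by ring. rewrite exp_0. lra.
  - assert (HG : - (f 0 * exp ((1 - lam) * 0)) <= - (f s * exp ((1 - lam) * s))).
    { apply (mono_le (fun t => - (f t * exp ((1-lam) * t)))
        (fun t => - ((Tf (f t) - f t) * exp ((1-lam) * t) + f t * ((1-lam) * exp ((1-lam) * t))))); auto.
      - intros x Hx. apply (is_derive_opp (K:=R_AbsRing) (V:=R_NormedModule) (fun t => f t * exp ((1-lam)*t))).
        apply der_fexp. apply (Ft_deriv d K lam F HF); auto. lra.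
      - intros x Hx. apply (continuous_opp (K:=R_AbsRing) (V:=R_NormedModule) (fun t => f t * exp ((1-lam)*t))).
        apply cont_fexp. apply (Ft_cont d K lam F HF).
      - intros x Hx. pose proof (T_le d K lam H1 H2 Hlam (f x) (Hin x Hx)).
        pose proof (exp_pos ((1-lam) * x)). fold Tf in H. nra. }
    unfold f in HG at 1. rewrite Ft_0 in HG. rewrite Rmult_0_r, exp_0, Rmult_1_r in HG.
    apply (Rmult_le_reg_r (exp ((1-lam) * s))). apply exp_pos.
    rewrite Rmult_assoc, <- exp_plus. replace (- (1 - lam) * s + (1 - lam) * s) with 0 by ring.
    rewrite exp_0. lra.
Qed.

Lemma exp_le1 x : x <= 0 -> exp x <= 1.
Proof. intros. rewrite <- exp_0. destruct H. left; apply exp_increasing; auto. subst; lra. Qed.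

Lemma inv_all w : 0 <= w -> lam * exp (- w) <= f w <= lam * exp (- (1 - lam) * w).
Proof.
  intros Hw. destruct Hw as [Hw|Hw]; [|subst w; unfold f; rewrite Ft_0;
    rewrite Ropp_0, Rmult_0_r, exp_0; lra].
  set (E := fun s => 0 <= s <= w /\ forall t, 0 <= t <= s -> 0 <= f t <= 1).
  assert (HE0 : E 0). { split. lra. intros t Ht. replace t with 0 by lra. unfold f; rewrite Ft_0; lra. }
  assert (Hb : bound E). { exists w. intros s Hs. apply Hs. }
  destruct (completeness E Hb (ex_intro _ 0 HE0)) as [m [Hub Hlub]].
  assert (Hm0 : 0 <= m) by (apply Hub; auto).
  assert (Hmw : m <= w) by (apply Hlub; intros s Hs; apply Hs).
  assert (Hbelow : forall t, 0 <= t < m -> 0 <= f t <= 1).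
  { intros t Ht. destruct (classic (exists s, E s /\ t < s)) as [[s [Hs Hts]]|Hn].
    - apply Hs. lra.
    - exfalso. assert (m <= t). { apply Hlub. intros s Hs. destruct (Rle_dec s t); auto.
        exfalso; apply Hn; exists s; split; auto; lra. } lra. }
  assert (Hbm : forall s, 0 <= s <= m -> lam * exp (- s) <= f s <= lam * exp (- (1 - lam) * s)).
  { intros s Hs. apply bounds_upto. lra. intros t Ht. apply Hbelow. lra. }
  destruct (Req_dec m w) as [Heq|Hne].
  { subst m. apply Hbm. lra. }
  exfalso.
  assert (Hfm := Hbm m ltac:(lra)).
  assert (He1 : exp (- (1 - lam) * m) <= 1) by (apply exp_le1; nra).
  pose proof (exp_pos (- m)).
  set (eps := Rmin (lam * exp (- m)) (1 - lam)).
  assert (Heps : 0 < eps) by (unfold eps; apply Rmin_glb_lt; nra).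
  pose proof (Ft_cont d K lam F HF m) as Hc.
  destruct (proj1 (filterlim_locally _ _) Hc (mkposreal eps Heps)) as [del Hdel].
  set (s' := Rmin (m + del / 2) w).
  assert (Hs'm : m < s').
  { unfold s'. apply Rmin_glb_lt. pose proof (cond_pos del). lra. lra. }
  assert (HEs' : E s').
  { split. split. lra. apply Rmin_r.
    intros t Ht. destruct (Rle_dec t m) as [Htm|Htm].
    - pose proof (Hbm t ltac:(lra)) as Hb2.
      assert (exp (- (1 - lam) * t) <= 1) by (apply exp_le1; nra).
      pose proof (exp_pos (- t)). split; nra.
    - assert (Hbl : ball m del t).
      { apply ball_R. apply Rabs_lt_between'. pose proof (cond_pos del).
        assert (s' <= m + del / 2) by apply Rmin_l. lra. }
      specialize (Hdel t Hbl). apply ball_R in Hdel. apply Rabs_lt_between' in Hdel.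
      simpl in Hdel. fold f in Hdel.
      assert (eps <= lam * exp (- m)) by apply Rmin_l.
      assert (eps <= 1 - lam) by apply Rmin_r. split; nra. }
  pose proof (Hub s' HEs'). lra.
Qed.
End Inv.

Section Ly.
Variables (d K : nat) (lam : R) (F : R -> R).
Hypothesis H1 : (1 <= K)%nat.
Hypothesis H2 : (K < d)%nat.
Hypothesis Hlam : 0 < lam < 1.
Hypothesis HF : is_LL_solution d K lam F.
Let f := Ft lam F.
Let Tf := T_LL d K lam.
Let g := fun t => Tf (f t).
Definition Ib b := RInt (fun t => T_LL d K lam (Ft lam F t)) 0 b.

Lemma g_cont x : continuous g x.
Proof. apply (TFt_cont d K lam F HF). Qed.

Lemma I_deriv x : is_derive Ib x (g x).
Proof.
  apply (is_derive_RInt g Ib 0 x).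
  - exists (mkposreal 1 Rlt_0_1). intros y _. apply (RInt_correct (V:=R_CompleteNormedModule)).
    apply (ex_RInt_continuous (V:=R_CompleteNormedModule)). intros; apply g_cont.
  - apply g_cont.
Qed.

Lemma I_cont x : continuous Ib x.
Proof. apply (ex_derive_continuous (K := R_AbsRing) (V := R_NormedModule)). eexists; apply I_deriv. Qed.

Lemma f_range w : 0 <= w -> 0 < f w <= lam.
Proof.
  intros Hw. pose proof (inv_all d K lam F H1 H2 Hlam HF w Hw) as Hb. fold f in Hb.
  pose proof (exp_pos (-w)). assert (exp (- (1 - lam) * w) <= 1) by (apply exp_le1; nra).
  split; nra.
Qed.

Lemma comp_deriv (Phi phi : R -> R) w : 0 < w ->
  (forall v, 0 < v < 1 -> is_derive Phi v (phi v)) ->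
  is_derive (fun t => Phi (1 - f t)) w (phi (1 - f w) * (f w - Tf (f w))).
Proof.
  intros Hw HP. pose proof (f_range w ltac:(lra)).
  assert (Hd : is_derive (fun t => 1 - f t) w (0 - (Tf (f w) - f w))).
  { assert (Hc : is_derive (fun _ : R => 1) w 0) by exact (is_derive_const (K:=R_AbsRing) (V:=R_NormedModule) 1 w).
    pose proof (Ft_deriv d K lam F HF w Hw) as Hf.
    exact (is_derive_minus (K:=R_AbsRing) (V:=R_NormedModule) (fun _ => 1) f w _ _ Hc Hf). }
  pose proof (is_derive_comp (K:=R_AbsRing) (V:=R_NormedModule) Phi (fun t => 1 - f t) w _ _
     (HP (1 - f w) ltac:(lra)) Hd) as HC.
  replace (phi (1 - f w) * (f w - Tf (f w))) with (scal (0 - (Tf (f w) - f w)) (phi (1 - f w))).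
  exact HC. unfold scal; simpl; unfold mult; simpl. unfold Tf. ring.
Qed.

Lemma comp_cont (Phi phi : R -> R) w : 0 <= w ->
  (forall v, 0 < v < 1 -> is_derive Phi v (phi v)) ->
  continuous (fun t => Phi (1 - f t)) w.
Proof.
  intros Hw HP. pose proof (f_range w Hw).
  apply (continuous_comp (fun t => 1 - f t) Phi).
  - apply (continuous_minus (K:=R_AbsRing) (V:=R_NormedModule) (fun _ => 1) f).
    apply continuous_const. apply (Ft_cont d K lam F HF).
  - apply (ex_derive_continuous (K := R_AbsRing) (V := R_NormedModule)). eexists. apply HP. lra.
Qed.

Lemma Ib0 : Ib 0 = 0.
Proof. unfold Ib. rewrite RInt_point. reflexivity. Qed.

Lemma f0 : f 0 = lam.
Proof. unfold f. apply Ft_0. Qed.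

Lemma lyap_lo (Phi phi : R -> R) b : 0 <= b ->
  (forall v, 0 < v < 1 -> is_derive Phi v (phi v)) ->
  (forall u, 0 < u < 1 -> phi (1 - u) * (u - Tf u) <= Tf u) ->
  Phi (1 - f b) - Phi (1 - lam) <= Ib b.
Proof.
  intros Hb HP Hc.
  assert (H : Ib 0 - Phi (1 - f 0) <= Ib b - Phi (1 - f b)).
  { apply (mono_le (fun t => Ib t - Phi (1 - f t)) (fun t => g t - phi (1 - f t) * (f t - Tf (f t)))); auto.
    - intros x Hx. pose proof (I_deriv x) as HI. pose proof (comp_deriv Phi phi x ltac:(lra) HP) as HC.
      exact (is_derive_minus (K:=R_AbsRing) (V:=R_NormedModule) Ib (fun t => Phi (1 - f t)) x _ _ HI HC).
    - intros x Hx. apply (continuous_minus (K:=R_AbsRing) (V:=R_NormedModule) Ib (fun t => Phi (1 - f t))).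
      apply I_cont. apply (comp_cont Phi phi); auto. lra.
    - intros x Hx. pose proof (f_range x ltac:(lra)). specialize (Hc (f x) ltac:(lra)).
      unfold g. lra. }
  rewrite Ib0, f0 in H. lra.
Qed.

Lemma lyap_hi (Phi phi : R -> R) b : 0 <= b ->
  (forall v, 0 < v < 1 -> is_derive Phi v (phi v)) ->
  (forall u, 0 < u < 1 -> Tf u <= phi (1 - u) * (u - Tf u)) ->
  Ib b <= Phi (1 - f b) - Phi (1 - lam).
Proof.
  intros Hb HP Hc.
  assert (H : Phi (1 - f 0) - Ib 0 <= Phi (1 - f b) - Ib b).
  { apply (mono_le (fun t => Phi (1 - f t) - Ib t) (fun t => phi (1 - f t) * (f t - Tf (f t)) - g t)); auto.
    - intros x Hx. pose proof (I_deriv x) as HI. pose proof (comp_deriv Phi phi x ltac:(lra) HP) as HC.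
      exact (is_derive_minus (K:=R_AbsRing) (V:=R_NormedModule) (fun t => Phi (1 - f t)) Ib x _ _ HC HI).
    - intros x Hx. apply (continuous_minus (K:=R_AbsRing) (V:=R_NormedModule) (fun t => Phi (1 - f t)) Ib).
      apply (comp_cont Phi phi); auto. lra. apply I_cont.
    - intros x Hx. pose proof (f_range x ltac:(lra)). specialize (Hc (f x) ltac:(lra)).
      unfold g. lra. }
  rewrite Ib0, f0 in H. lra.
Qed.

Lemma I_mono a b : 0 <= a <= b -> Ib a <= Ib b.
Proof.
  intros Hab. apply (mono_le Ib g); try lra.
  - intros; apply I_deriv.
  - intros; apply I_cont.
  - intros x Hx. pose proof (f_range x ltac:(lra)). unfold g.
    apply (T_nonneg d K lam H1 Hlam). lra.
Qed.
End Ly.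

Definition aL d K lam := lam * INR d / INR K - 1.
Definition alL d K lam := - (INR d / INR K) / aL d K lam.
Definition beL d K lam := 1 - alL d K lam * (1 - lam).
Definition loB d K lam := lam * (alL d K lam * (1 - (1 - lam)) + beL d K lam / aL d K lam * (ln (aL d K lam / 2) - ln (1 + aL d K lam))
   - beL d K lam / aL d K lam * ln (1 - lam)).

Section Bd.
Variables (d K : nat) (lam : R) (F : R -> R).
Hypothesis H1 : (1 <= K)%nat.
Hypothesis H2 : (K < d)%nat.
Hypothesis Hlam : 0 < lam < 1.
Hypothesis HF : is_LL_solution d K lam F.
Let m := INR d - INR K.

Lemma upper_I b : 0 <= b -> Ib d K lam F b <= Cc d K - INR K / m * ln (1 - lam).
Proof.
  intros Hb. pose proof (mpos d K H2) as Hm. pose proof (Kpos K H1) as HK. fold m in Hm.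
  set (Phi := fun v => INR K / m * ln v + Cc d K * v).
  set (phi := fun v => INR K / (m * v) + Cc d K).
  assert (HP : forall v, 0 < v < 1 -> is_derive Phi v (phi v)).
  { intros v Hv. unfold Phi, phi. auto_derive. lra. field. lra. }
  pose proof (lyap_hi d K lam F H1 H2 Hlam HF Phi phi b Hb HP) as HL.
  assert (HC : forall u, 0 < u < 1 -> T_LL d K lam u <= phi (1 - u) * (u - T_LL d K lam u)).
  { intros u Hu. unfold phi. apply (upper_cond d K lam H1 H2 Hlam). auto. }
  specialize (HL HC).
  pose proof (f_range d K lam F H1 H2 Hlam HF b Hb) as Hr.
  unfold Phi in HL.
  assert (ln (1 - Ft lam F b) <= 0).
  { rewrite <- ln_1. apply ln_le; lra. }
  assert (INR K / m * ln (1 - Ft lam F b) <= 0).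
  { assert (0 < INR K / m) by (apply Rdiv_lt_0_compat; lra). nra. }
  pose proof (Cc_pos d K H1 H2).
  assert (Cc d K * (1 - Ft lam F b) <= Cc d K) by nra.
  assert (0 <= Cc d K * (1 - lam)) by nra.
  lra.
Qed.

Lemma lower_I : INR K < lam * INR d ->
  exists b, 0 <= b /\ loB d K lam <= Ib d K lam F b.
Proof.
  intros Hl. pose proof (Kpos K H1) as HK. unfold loB, beL, alL.
  set (a := aL d K lam). set (eps := 1 - lam). set (alpha := - (INR d / INR K) / a).
  set (beta := 1 - alpha * eps).
  assert (Ha : 0 < a).
  { unfold a, aL. apply (Rmult_lt_reg_r (INR K)); auto. field_simplify; lra. }
  assert (He : 0 < eps) by (unfold eps; lra).
  assert (Hd : 0 < INR d / INR K).
  { apply Rdiv_lt_0_compat; auto. pose proof (INR_lt_dK d K H2). lra. }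
  assert (Hal : alpha < 0).
  { unfold alpha. unfold Rdiv. assert (0 < INR d * / INR K) by exact Hd.
    assert (0 < / a) by (apply Rinv_0_lt_compat; auto). nra. }
  assert (Hbeta : 0 < beta) by (unfold beta; nra).
  assert (Hba : 0 < beta / a) by (apply Rdiv_lt_0_compat; auto).
  set (Phi := fun v => lam * (alpha * v + beta / a * ln (eps + a * v))).
  set (phi := fun v => lam * (1 - INR d / INR K * v) / (eps + a * v)).
  assert (HP : forall v, 0 < v < 1 -> is_derive Phi v (phi v)).
  { intros v Hv. unfold Phi, phi. auto_derive. nra.
    unfold beta, alpha. field. split; nra. }
  set (b := ln 2 / eps).
  assert (Hb : 0 <= b).
  { unfold b. left. apply Rdiv_lt_0_compat; auto. rewrite <- ln_1. apply ln_increasing; lra. }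
  exists b. split; auto.
  pose proof (lyap_lo d K lam F H1 H2 Hlam HF Phi phi b Hb HP) as HL.
  assert (HC : forall u, 0 < u < 1 -> phi (1 - u) * (u - T_LL d K lam u) <= T_LL d K lam u).
  { intros u Hu. unfold phi, eps, a, aL. apply (lower_cond d K lam H1 H2 Hlam); auto. }
  specialize (HL HC).
  pose proof (f_range d K lam F H1 H2 Hlam HF b Hb) as Hr.
  pose proof (inv_all d K lam F H1 H2 Hlam HF b Hb) as Hi.
  assert (Hfb : Ft lam F b <= / 2).
  { replace (- (1 - lam) * b) with (- ln 2) in Hi by (unfold b, eps; field; lra).
    rewrite (exp_Ropp (ln 2)), exp_ln in Hi by lra. nra. }
  assert (Hv : / 2 <= 1 - Ft lam F b <= 1) by lra.
  set (v := 1 - Ft lam F b) in *.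
  unfold Phi in HL.
  assert (a / 2 <= eps + a * v) by nra.
  assert (ln (a / 2) <= ln (eps + a * v)) by (apply ln_le; lra).
  assert (Hln : ln (eps + a * eps) = ln eps + ln (1 + a)).
  { rewrite <- ln_mult by lra. f_equal. ring. }
  replace (1 - lam) with eps in HL by reflexivity. rewrite Hln in HL.
  assert (alpha <= alpha * v) by nra.
  assert (beta / a * ln (a / 2) <= beta / a * ln (eps + a * v)) by (apply Rmult_le_compat_l; lra).
  nra.
Qed.

Lemma mw_char : exists L, mean_wait d K lam F = / lam * L /\
  (forall b, 0 <= b -> Ib d K lam F b <= L) /\ L <= Cc d K - INR K / m * ln (1 - lam).
Proof.
  set (E := fun y => exists b, 0 <= b /\ y = Ib d K lam F b).
  assert (HE0 : E (Ib d K lam F 0)) by (exists 0; split; auto; lra).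
  assert (Hb : bound E).
  { exists (Cc d K - INR K / m * ln (1 - lam)). intros y [b [Hb Hy]]. subst y. apply upper_I; auto. }
  destruct (completeness E Hb (ex_intro _ _ HE0)) as [L [Hub Hlub]].
  exists L.
  assert (HI : forall b, 0 <= b -> Ib d K lam F b <= L).
  { intros b Hb0. apply Hub. exists b; auto. }
  split; [|split; auto].
  2:{ apply Hlub. intros y [b [Hb0 Hy]]. subst y. apply upper_I; auto. }
  unfold mean_wait. f_equal.
  assert (Hlim : is_lim (fun b => RInt (fun w => T_LL d K lam (F w)) 0 b) p_infty L).
  { unfold is_lim. simpl Rbar_locally.
    apply (proj2 (filterlim_locally _ _)). intros eps.
    destruct (classic (exists b, 0 <= b /\ L - eps < Ib d K lam F b)) as [[b0 [Hb0 Hlt]]|Hn].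
    - exists b0. intros x Hx.
      assert (Hext : RInt (fun w => T_LL d K lam (F w)) 0 x = Ib d K lam F x).
      { unfold Ib. apply RInt_ext. intros t Ht. rewrite Rmin_left in Ht by lra.
        rewrite Rmax_right in Ht by lra. rewrite Ft_pos; auto. lra. }
      rewrite Hext. apply ball_R. apply Rabs_lt_between'.
      pose proof (I_mono d K lam F H1 H2 Hlam HF b0 x ltac:(lra)).
      pose proof (HI x ltac:(lra)). pose proof (cond_pos eps). lra.
    - exfalso. assert (L <= L - eps).
      { apply Hlub. intros y [b [Hb0 Hy]]. subst y. destruct (Rle_dec (Ib d K lam F b) (L - eps)); auto.
        exfalso. apply Hn. exists b. split; auto. lra. }
      pose proof (cond_pos eps). lra. }
  rewrite (is_lim_unique _ _ _ Hlim). reflexivity.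
Qed.
End Bd.

Lemma lim_pm {F : (R -> Prop) -> Prop} {FF : Filter F} (f g h : R -> R) A B :
  filterlim f F (locally A) -> filterlim g F (locally B) -> filterlim h F (locally 0) ->
  filterlim (fun x => f x + g x * h x) F (locally A).
Proof.
  intros Hf Hg Hh.
  assert (Hgh : filterlim (fun x => g x * h x) F (locally (B * 0))).
  { apply (filterlim_comp_2 g h Rmult Hg Hh). apply (filterlim_mult (K:=R_AbsRing) B 0). }
  rewrite Rmult_0_r in Hgh.
  pose proof (filterlim_plus (K:=R_AbsRing) (V:=R_NormedModule) A 0) as HP.
  change (plus A 0) with (A + 0) in HP. rewrite Rplus_0_r in HP.
  apply (filterlim_comp_2 f (fun x => g x * h x) Rplus Hf Hgh). exact HP.
Qed.

Lemma squeeze {F : (R -> Prop) -> Prop} {FF : Filter F} (lo f hi : R -> R) l :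
  F (fun x => lo x <= f x <= hi x) -> filterlim lo F (locally l) -> filterlim hi F (locally l) ->
  filterlim f F (locally l).
Proof.
  intros Hb Hl Hh. apply (proj2 (filterlim_locally _ _)). intros eps.
  pose proof (proj1 (filterlim_locally _ _) Hl eps) as Hl'.
  pose proof (proj1 (filterlim_locally _ _) Hh eps) as Hh'.
  generalize (filter_and _ _ Hb (filter_and _ _ Hl' Hh')).
  apply filter_imp. intros x [Hx [H1 H2]]. apply ball_R in H1. apply ball_R in H2. apply ball_R.
  apply Rabs_lt_between' in H1. apply Rabs_lt_between' in H2. apply Rabs_lt_between'. lra.
Qed.

Lemma cont_left (g : R -> R) : continuous g 1 -> filterlim g (at_left 1) (locally (g 1)).
Proof. intros H. apply (filterlim_filter_le_1 g (filter_le_within _) H). Qed.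

Lemma cont_left' (g : R -> R) y : continuous g 1 -> g 1 = y -> filterlim g (at_left 1) (locally y).
Proof. intros H <-. apply cont_left; auto. Qed.

Lemma r_lim : filterlim (fun l => / (- ln (1 - l))) (at_left 1) (locally 0).
Proof.
  apply (proj2 (filterlim_locally _ _)). intros eps.
  pose proof (cond_pos eps) as He.
  exists (mkposreal (exp (- / eps)) (exp_pos _)). intros x Hx Hx1.
  apply ball_R in Hx. simpl in Hx. apply Rabs_lt_between' in Hx.
  assert (Hl : ln (1 - x) < - / eps).
  { rewrite <- (ln_exp (- / eps)). apply ln_increasing; lra. }
  assert (0 < / eps) by (apply Rinv_0_lt_compat; lra).
  apply ball_R. rewrite Rminus_0_r. rewrite Rabs_pos_eq.
  - replace (pos eps) with (/ / eps) by (field; lra). apply Rinv_lt_contravar; nra.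
  - left; apply Rinv_0_lt_compat; lra.
Qed.

Section Main.
Variables d K : nat.
Hypothesis H1 : (1 <= K)%nat.
Hypothesis H2 : (K < d)%nat.

Lemma aL1 : aL d K 1 = (INR d - INR K) / INR K.
Proof. unfold aL. pose proof (Kpos K H1). field. lra. Qed.

Lemma aL1_pos : 0 < aL d K 1.
Proof. rewrite aL1. apply Rdiv_lt_0_compat. pose proof (mpos d K H2). lra. apply (Kpos K H1). Qed.

Lemma lim_ba : filterlim (fun l => beL d K l / aL d K l) (at_left 1) (locally (INR K / (INR d - INR K))).
Proof.
  pose proof aL1_pos as Ha. pose proof (Kpos K H1). pose proof (mpos d K H2).
  replace (INR K / (INR d - INR K)) with ((fun l => beL d K l / aL d K l) 1).
  2:{ unfold beL. rewrite aL1. field. lra. }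
  apply cont_left. apply (ex_derive_continuous (K := R_AbsRing) (V := R_NormedModule)).
  unfold beL, alL. unfold aL in Ha |- *. auto_derive. lra.
Qed.

Definition Ef d K l := alL d K l * (1 - (1 - l)) + beL d K l / aL d K l * (ln (aL d K l / 2) - ln (1 + aL d K l)).

Lemma lim_E : filterlim (Ef d K) (at_left 1) (locally (Ef d K 1)).
Proof.
  pose proof aL1_pos as Ha. apply cont_left.
  apply (ex_derive_continuous (K := R_AbsRing) (V := R_NormedModule)).
  unfold Ef, beL, alL. unfold aL in Ha |- *. auto_derive. repeat split; lra.
Qed.

Lemma lim_inv c : filterlim (fun l => c * / l) (at_left 1) (locally c).
Proof.
  apply cont_left'. 2:{ cbv beta. field. } apply (ex_derive_continuous (K := R_AbsRing) (V := R_NormedModule)).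
  auto_derive. lra.
Qed.

Theorem main_thm (F : R -> R -> R) :
  (forall lam, 0 < lam < 1 -> is_LL_solution d K lam (F lam)) ->
  filterlim (fun lam => - mean_wait d K lam (F lam) / ln (1 - lam))
    (at_left 1) (locally (INR K / INR (d - K))).
Proof.
  intros HF. rewrite minus_INR by lia.
  pose proof (Kpos K H1) as HK. pose proof (mpos d K H2) as Hm.
  set (r := fun l => / (- ln (1 - l))).
  apply (squeeze (fun l => beL d K l / aL d K l + Ef d K l * r l) _
                 (fun l => INR K / (INR d - INR K) * / l + (Cc d K * / l) * r l)).
  - assert (Hd : INR K / INR d < 1).
    { pose proof (INR_lt_dK d K H2). apply (Rmult_lt_reg_r (INR d)). lra.
      field_simplify; lra. }
    exists (mkposreal (1 - INR K / INR d) ltac:(lra)). intros l Hl Hl1.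
    apply ball_R in Hl. simpl in Hl. apply Rabs_lt_between' in Hl.
    assert (Hl0 : INR K / INR d < l) by lra.
    assert (HdP : 0 < INR d) by (pose proof (INR_lt_dK d K H2); lra).
    assert (Hlp : 0 < l) by (assert (0 < INR K / INR d) by (apply Rdiv_lt_0_compat; lra); lra).
    assert (Hlam : 0 < l < 1) by lra.
    assert (Hkl : INR K < l * INR d).
    { apply (Rmult_lt_compat_r (INR d)) in Hl0; auto. field_simplify in Hl0; lra. }
    specialize (HF l Hlam).
    destruct (mw_char d K l (F l) H1 H2 Hlam HF) as [L [Hmw [HI HU]]].
    destruct (lower_I d K l (F l) H1 H2 Hlam HF Hkl) as [b [Hb Hlo]].
    pose proof (HI b Hb) as HIb.
    assert (Hln : ln (1 - l) < 0) by (rewrite <- ln_1; apply ln_increasing; lra).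
    set (ell := - ln (1 - l)) in *.
    assert (Hell : 0 < ell) by (unfold ell; lra).
    assert (HR : - mean_wait d K l (F l) / ln (1 - l) = L / (l * ell)).
    { rewrite Hmw. unfold ell. field. split; lra. }
    rewrite HR. unfold r. fold ell.
    assert (Hl2 : 0 < l * ell) by nra.
    split.
    + apply (Rmult_le_reg_r (l * ell)); auto.
      replace (L / (l * ell) * (l * ell)) with L by (field; lra).
      eapply Rle_trans; [|exact HIb]. eapply Rle_trans; [|exact Hlo]. unfold loB, Ef. fold ell.
      right. replace (ln (1 - l)) with (- ell) by (unfold ell; ring).
      assert (aL d K l <> 0).
      { unfold aL. apply Rgt_not_eq. apply (Rmult_lt_reg_r (INR K)); auto. field_simplify; lra. }
      field. repeat split; lra.
    + apply (Rmult_le_reg_r (l * ell)); auto.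
      replace (L / (l * ell) * (l * ell)) with L by (field; lra).
      eapply Rle_trans; [exact HU|]. right.
      replace (ln (1 - l)) with (- ell) by (unfold ell; ring).
      field. repeat split; lra.
  - apply (lim_pm _ _ _ _ (Ef d K 1)). apply lim_ba. apply lim_E. apply r_lim.
  - apply (lim_pm _ _ _ _ (Cc d K)). apply lim_inv. apply lim_inv. apply r_lim.
Qed.
End Main.


Theorem mainTheorem5 (d K : nat) (F : R -> R -> R) :
  (1 <= K)%nat -> (K < d)%nat ->
  (forall lam, 0 < lam < 1 -> is_LL_solution d K lam (F lam)) ->
  filterlim (fun lam => - mean_wait d K lam (F lam) / ln (1 - lam))
    (at_left 1) (locally (INR K / INR (d - K))).
Proof.
  intros H1 H2 HF. exact (main_thm d K H1 H2 F HF).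
Qed.
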